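(* Let $V$ be a real vector space and $C$ a cone in $V$. Suppose $Y$ is a decomposably $C$-antichain-convex subset of $V$ and put $K=\operatorname{co}(C\cup\{0\})$. Then: (1) for each $y\in\operatorname{co}(Y)$ there exists $z\in Y$ with $z\in y+K$; (2) for each $y\in\operatorname{co}(Y)$ there exists $x\in Y$ with $y\in x+K$.
   Context: A cone in a real vector space $V$ is a subset $C$ with $\lambda C\subseteq C$ for all $\lambda>0$ (it may be empty and need not contain $0$). A subset $S\subseteq V$ is $C$-antichain-convex iff for all $x,y\in S$ and $\lambda\in[0,1]$ with $y-x\notin C\cup(-C)$ one has $\lambda x+(1-\lambda)y\in S$. A set $S$ is decomposably $C$-antichain-convex iff $S=S_1+\dots+S_n$ (Minkowski sum) for some finite collection of $C$-antichain-convex subsets $S_1,\dots,S_n$ of $V$. $\operatorname{co}$ denotes the convex hull. *)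

(* Defs.v *)
From HB Require Import structures.
From mathcomp Require Import all_boot all_order all_algebra.
From mathcomp Require Import reals.
Set Implicit Arguments. Unset Strict Implicit. Unset Printing Implicit Defensive.
Import Order.TTheory GRing.Theory Num.Theory.
Local Open Scope ring_scope.

(* C is a cone: lambda C ⊆ C for every lambda > 0 (may be empty, need not contain 0). *)
Definition is_cone (R : realType) (V : lmodType R) (C : V -> Prop) : Prop :=
  forall (lam : R) (c : V), 0 < lam -> C c -> C (lam *: c).

Definition oppset (R : realType) (V : lmodType R) (C : V -> Prop) : V -> Prop :=
  fun v => exists c, C c /\ v = - c.

Definition antichain_convex (R : realType) (V : lmodType R) (C S : V -> Prop) : Prop :=
  forall (x y : V) (lam : R), S x -> S y -> 0 <= lam -> lam <= 1 ->
    ~ (C (y - x) \/ oppset C (y - x)) ->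
    S (lam *: x + (1 - lam) *: y).

Definition minkowski_sum (R : realType) (V : lmodType R) (n : nat)
  (S : 'I_n -> V -> Prop) : V -> Prop :=
  fun v => exists p : 'I_n -> V, (forall i, S i (p i)) /\ v = \sum_(i < n) p i.

Definition decomp_antichain_convex (R : realType) (V : lmodType R) (C Y : V -> Prop) : Prop :=
  exists (n : nat) (S : 'I_n -> V -> Prop),
    (forall i, antichain_convex C (S i)) /\ Y = minkowski_sum S.

Definition co (R : realType) (V : lmodType R) (S : V -> Prop) : V -> Prop :=
  fun v => exists (n : nat) (w : 'I_n -> R) (p : 'I_n -> V),
    (forall i, 0 <= w i) /\ \sum_(i < n) w i = 1 /\ (forall i, S (p i)) /\
    v = \sum_(i < n) w i *: p i.

(* Main.v *)
Require Import Defs.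
From HB Require Import structures.
From mathcomp Require Import all_boot all_order all_algebra.
From mathcomp Require Import reals.
From Stdlib Require Import Classical.
Import Order.TTheory GRing.Theory Num.Theory.
Local Open Scope ring_scope.
Set Implicit Arguments. Unset Strict Implicit.

Definition K2 (R : realType) (V : lmodType R) (C : V -> Prop) : V -> Prop :=
  fun k => exists s : seq V, (forall x, x \in s -> C x \/ x = 0) /\ k = \sum_(x <- s) x.

Lemma K2_0 (R : realType) (V : lmodType R) (C : V -> Prop) : K2 C 0.
Proof. exists [::]; split; first by []. by rewrite big_nil. Qed.

Lemma K2_add (R : realType) (V : lmodType R) (C : V -> Prop) a b :
  K2 C a -> K2 C b -> K2 C (a + b).
Proof.
move=> [s [Hs ->]] [t [Ht ->]]; exists (s ++ t); split; last by rewrite big_cat.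
by move=> x; rewrite mem_cat => /orP [/Hs|/Ht].
Qed.

Lemma K2_scale (R : realType) (V : lmodType R) (C : V -> Prop) (t : R) a :
  is_cone C -> 0 <= t -> K2 C a -> K2 C (t *: a).
Proof.
move=> HC t0 [s [Hs ->]]; exists (map (fun x => t *: x) s); split.
  move=> x /mapP [y /Hs [Cy|->] ->]; last by right; rewrite scaler0.
  move: t0; rewrite le_eqVlt => /orP [/eqP <-|tp]; first by right; rewrite scale0r.
  by left; apply: HC.
by rewrite big_map scaler_sumr.
Qed.

Lemma K2_C (R : realType) (V : lmodType R) (C : V -> Prop) (t : R) c :
  is_cone C -> 0 <= t -> C c -> K2 C (t *: c).
Proof.
move=> HC t0 Cc; apply: K2_scale => //; exists [:: c]; split.
  by move=> x; rewrite inE => /eqP ->; left.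
by rewrite big_seq1.
Qed.

Lemma K2_sum (R : realType) (V : lmodType R) (C : V -> Prop) n (F : 'I_n -> V) :
  (forall i, K2 C (F i)) -> K2 C (\sum_(i < n) F i).
Proof.
move=> H; apply: (big_ind (K2 C)); [exact: K2_0 | exact: K2_add | by []].
Qed.

Lemma K2_K (R : realType) (V : lmodType R) (C : V -> Prop) k :
  is_cone C -> K2 C k -> co (fun v => C v \/ v = 0) k.
Proof.
move=> HC [s [Hs ->]].
case: s Hs => [|a s] Hs.
  exists 1%N, (fun _ => 1), (fun _ => 0); split; first by move=> _; exact: ler01.
  split; first by rewrite big_ord1.
  split; first by move=> _; right.
  by rewrite big_nil big_ord1 scaler0.
set s' := a :: s.
have np : 0 < (size s')%:R :> R by rewrite ltr0n.
exists (size s'), (fun _ => ((size s')%:R)^-1),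
   (fun i => (size s')%:R *: nth 0 s' i); split.
  by move=> _; rewrite invr_ge0 ltW.
split.
  by rewrite sumr_const card_ord -[_ *+ _]mulr_natr mulVf // gt_eqF.
split.
  move=> i; have : nth 0 s' i \in s' by rewrite mem_nth.
  move=> /Hs [Cx|->]; last by right; rewrite scaler0.
  by left; apply: HC.
rewrite (big_nth 0) big_mkord; apply: eq_bigr => i _.
by rewrite scalerA mulVf ?gt_eqF // scale1r.
Qed.
Lemma E1 (R : realType) (V : lmodType R) (x y : V) (l : R) :
  y - (l *: x + (1 - l) *: y) = l *: (y - x).
Proof. by rewrite scalerBl scale1r scalerBr opprD opprB addrA addrC addrA subrK. Qed.
Lemma E2 (R : realType) (V : lmodType R) (x y : V) (l : R) :
  (l *: x + (1 - l) *: y) - x = (1 - l) *: (y - x).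
Proof. by rewrite scalerBr [(1 - l) *: x]scalerBl scale1r opprB [l *: x + _]addrC addrA. Qed.
Lemma E3 (R : realType) (V : lmodType R) (x y : V) (l : R) :
  x - (l *: x + (1 - l) *: y) = (1 - l) *: (x - y).
Proof. by rewrite -opprB E2 -scalerN opprB. Qed.
Lemma E4 (R : realType) (V : lmodType R) (x y : V) (l : R) :
  (l *: x + (1 - l) *: y) - y = l *: (x - y).
Proof. by rewrite -opprB E1 -scalerN opprB. Qed.

Lemma F1 (V : zmodType) (u a b c : V) : u - (a + c) = (u - (b + c)) + (b - a).
Proof. rewrite !opprD -addrA; congr (u + _). by rewrite addrC addrA [b - a]addrC addrK. Qed.
Lemma F2 (V : zmodType) (v a b c : V) : (a + c) - v = ((b + c) - v) + (a - b).
Proof. by rewrite [RHS]addrC !addrA subrK. Qed.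

Lemma two_point (R : realType) (V : lmodType R) (C S : V -> Prop) x y (l : R) :
  is_cone C -> antichain_convex C S -> S x -> S y -> 0 <= l -> l <= 1 ->
  (exists z, S z /\ K2 C (z - (l *: x + (1 - l) *: y))) /\
  (exists w, S w /\ K2 C ((l *: x + (1 - l) *: y) - w)).
Proof.
move=> HC HS Sx Sy l0 l1.
have l10 : 0 <= 1 - l by rewrite subr_ge0.
case: (classic (C (y - x) \/ oppset C (y - x))) => [[Cd|[c [Cc Ed]]]|Hn].
- split; [exists y; split=> //; rewrite E1 | exists x; split=> //; rewrite E2];
  exact: K2_C.
- have Ec : x - y = c by rewrite -opprB Ed opprK.
  split; [exists x; split=> //; rewrite E3 Ec | exists y; split=> //; rewrite E4 Ec];
  exact: K2_C.
- have Sp := HS x y l Sx Sy l0 l1 Hn.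
  by split; [exists (l *: x + (1 - l) *: y) | exists (l *: x + (1 - l) *: y)];
    rewrite subrr; split=> //; exact: K2_0.
Qed.

Lemma single (R : realType) (V : lmodType R) (C S : V -> Prop) n
  (w : 'I_n -> R) (p : 'I_n -> V) :
  is_cone C -> antichain_convex C S ->
  (forall i, 0 <= w i) -> \sum_(i < n) w i = 1 -> (forall i, S (p i)) ->
  (exists z, S z /\ K2 C (z - \sum_(i < n) w i *: p i)) /\
  (exists z, S z /\ K2 C (\sum_(i < n) w i *: p i - z)).
Proof.
move=> HC HS; elim: n w p => [|n IH] w p w0 w1 Sp.
  by move: w1; rewrite big_ord0 => /eqP; rewrite eq_sym oner_eq0.
rewrite big_ord_recr /=; move: w1; rewrite big_ord_recr /= => w1.
set W := \sum_(i < n) w (widen_ord (leqnSn n) i) in w1 *.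
have W0 : 0 <= W by apply: sumr_ge0.
have wn : w ord_max = 1 - W by apply/eqP; rewrite eq_sym subr_eq addrC w1.
case: (eqVneq W 0) => [WE|WN].
  have wi0 : forall i : 'I_n, w (widen_ord (leqnSn n) i) = 0.
    by move=> i; apply: (psumr_eq0P (fun j _ => w0 _) WE).
  rewrite big1 ?add0r; last by move=> i _; rewrite wi0 scale0r.
  rewrite wn WE subr0 scale1r.
  by split; exists (p ord_max); rewrite subrr; split=> //; exact: K2_0.
have Wp : 0 < W by rewrite lt_def WN W0.
have W1 : W <= 1 by rewrite -w1 lerDl.
have [[z [Sz Kz]] [z' [Sz' Kz']]] :=
  IH (fun i => w (widen_ord (leqnSn n) i) / W) (fun i => p (widen_ord (leqnSn n) i))
     (fun i => divr_ge0 (w0 _) W0) ltac:(by rewrite -mulr_suml mulfV) (fun i => Sp _).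
have Esum : \sum_(i < n) w (widen_ord (leqnSn n) i) *: p (widen_ord (leqnSn n) i)
   = W *: \sum_(i < n) (w (widen_ord (leqnSn n) i) / W) *: p (widen_ord (leqnSn n) i).
  rewrite scaler_sumr; apply: eq_bigr => i _.
  by rewrite scalerA mulrC divfK.
rewrite Esum wn.
set M := \sum_(i < n) _ in Kz Kz' *.
have [[u [Su Ku]] _] := two_point HC HS Sz (Sp ord_max) W0 W1.
have [_ [v [Sv Kv]]] := two_point HC HS Sz' (Sp ord_max) W0 W1.
split.
  exists u; split=> //.
  have -> : u - (W *: M + (1 - W) *: p ord_max) =
     (u - (W *: z + (1 - W) *: p ord_max)) + W *: (z - M).
    by rewrite scalerBr -F1.
  by apply: K2_add => //; apply: K2_scale.
exists v; split=> //.
have -> : W *: M + (1 - W) *: p ord_max - v =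
   ((W *: z' + (1 - W) *: p ord_max) - v) + W *: (M - z').
  by rewrite scalerBr -F2.
by apply: K2_add => //; apply: K2_scale.
Qed.

Lemma decomp_sum (R : realType) (V : lmodType R) n (S : 'I_n -> V -> Prop) y :
  co (minkowski_sum S) y ->
  exists P : 'I_n -> V, (forall i, co (S i) (P i)) /\ y = \sum_(i < n) P i.
Proof.
move=> [m [w [q [w0 [w1 [Hq ->]]]]]].
have [P HP] := fin_all_exists Hq.
exists (fun i => \sum_(j < m) w j *: P j i); split.
  move=> i; exists m, w, (fun j => P j i); split=> //; split=> //; split=> //.
  by move=> j; case: (HP j).
rewrite exchange_big /=; apply: eq_bigr => j _.
by case: (HP j) => _ ->; rewrite scaler_sumr.
Qed.

Unset Implicit Arguments.

Theorem theorem3 (R : realType) (V : lmodType R) (C Y : V -> Prop) :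
  is_cone C ->
  decomp_antichain_convex C Y ->
  let K := co (fun v => C v \/ v = 0) in
  (forall y, co Y y -> exists z, Y z /\ exists k, K k /\ z = y + k) /\
  (forall y, co Y y -> exists x, Y x /\ exists k, K k /\ y = x + k).
Proof.
move=> HC [n [S [HS ->]]] K.
have key : forall y, co (minkowski_sum S) y ->
  (exists z, minkowski_sum S z /\ K2 C (z - y)) /\
  (exists x, minkowski_sum S x /\ K2 C (y - x)).
  move=> y /decomp_sum [P [HP ->]].
  have H1 : forall i, exists z, S i z /\ K2 C (z - P i).
    move=> i; case: (HP i) => m [w [p [w0 [w1 [Sp ->]]]]].
    by case: (single HC (HS i) w0 w1 Sp).
  have H2 : forall i, exists z, S i z /\ K2 C (P i - z).
    move=> i; case: (HP i) => m [w [p [w0 [w1 [Sp ->]]]]].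
    by case: (single HC (HS i) w0 w1 Sp).
  have [Z HZ] := fin_all_exists H1.
  have [X HX] := fin_all_exists H2.
  split.
    exists (\sum_(i < n) Z i); split.
      by exists Z; split=> // i; case: (HZ i).
    by rewrite -sumrB; apply: K2_sum => i; case: (HZ i).
  exists (\sum_(i < n) X i); split.
    by exists X; split=> // i; case: (HX i).
  by rewrite -sumrB; apply: K2_sum => i; case: (HX i).
split.
  move=> y /key [[z [Hz Kz]] _]; exists z; split=> //.
  exists (z - y); split; first exact: K2_K.
  by rewrite addrC subrK.
move=> y /key [_ [x [Hx Kx]]]; exists x; split=> //.
exists (y - x); split; first exact: K2_K.
by rewrite addrC subrK.
Qed.
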